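(* Let $H=(V,E)$ be a $3$-uniform hypergraph in which every vertex has even degree, and let $G=\mathcal G(H)$ be its incidence graph. The following are equivalent: (1) $H$ is quasi-eulerian; (2) $G$ has a spanning subgraph in which every v-vertex has even degree and every e-vertex has degree exactly $1$; (3) $E$ can be partitioned into pairs $\{e,e'\}$ of distinct edges with $e\cap e'\ne\emptyset$.
   Context: A hypergraph $H=(V,E)$ consists of a finite nonempty vertex set $V$, a finite edge set $E$ disjoint from $V$, and an incidence function assigning to each edge $e\in E$ a subset of $V$ (also denoted $e$); distinct edges may have the same vertex set. $H$ is $3$-uniform if $|e|=3$ for all $e\in E$. The degree of a vertex is the number of edges containing it. A walk is a sequence $W=v_0e_1v_1e_2\cdots e_kv_k$ with $v_i\in V$, $e_i\in E$, such that for each $i$, $v_{i-1}\ne v_i$ and $v_{i-1},v_i\in e_i$; the $v_i$ are its anchors. $W$ is closed if $k\ge 2$ and $v_0=v_k$; it is a strict trail if $e_1,\dots,e_k$ are pairwise distinct. An Euler family of $H$ is a family of closed strict trails such that every edge of $H$ lies in exactly one trail and no two trails have a common anchor; $H$ is quasi-eulerian if it has one. The incidence graph $\mathcal G(H)$ is the simple bipartite graph with vertex set $V\cup E$ in which $v\in V$ and $e\in E$ are adjacent iff $v\in e$; vertices in $V$ are v-vertices and those in $E$ e-vertices. *)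

(* Defs.v *)
From mathcomp Require Import all_boot.
Set Implicit Arguments. Unset Strict Implicit. Unset Printing Implicit Defensive.

(* A hypergraph is given by finite types V (vertices) and E (edges) together
   with an incidence function inc : E -> {set V}.  Distinct edges may have the
   same vertex set. *)

Section Hyper.
Variables (V E : finType) (inc : E -> {set V}).

Definition three_uniform : Prop := forall e : E, #|inc e| = 3.

Definition vdeg (v : V) : nat := #|[set e | v \in inc e]|.

(* A walk v0 e1 v1 ... ek vk is represented by its first anchor v0 and the
   sequence [:: (e1,v1); ...; (ek,vk)]. *)
Definition walk := (V * seq (E * V))%type.

Fixpoint walk_steps (v : V) (s : seq (E * V)) : bool :=
  match s with
  | [::] => true
  | (e, w) :: s' => [&& v != w, v \in inc e, w \in inc e & walk_steps w s']
  end.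

Definition is_walk (W : walk) : bool := walk_steps W.1 W.2.
Definition walk_edges (W : walk) : seq E := map fst W.2.
Definition anchors (W : walk) : seq V := W.1 :: map snd W.2.

Definition is_closed (W : walk) : bool :=
  (2 <= size W.2) && (last W.1 (map snd W.2) == W.1).

Definition is_strict_trail (W : walk) : bool := uniq (walk_edges W).

Definition is_closed_strict_trail (W : walk) : bool :=
  [&& is_walk W, is_closed W & is_strict_trail W].

(* A family of trails is a finite list of trails; "no two trails have a common
   anchor" is required for every pair of distinct positions in the list. *)
Definition euler_family (F : seq walk) : Prop :=
  [/\ all is_closed_strict_trail F,
      forall e : E, count (fun W => e \in walk_edges W) F = 1
    & pairwise (fun W1 W2 => [disjoint anchors W1 & anchors W2]) F].

Definition quasi_eulerian : Prop := exists F : seq walk, euler_family F.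

(* Incidence graph: bipartite graph on V + E, with edge {v,e} iff v \in inc e.
   A spanning subgraph is determined by a subset S of these incidence edges. *)
Definition incidence_edge (p : V * E) : bool := p.1 \in inc p.2.

Definition good_spanning_subgraph (S : {set V * E}) : Prop :=
  [/\ forall p, p \in S -> incidence_edge p,
      forall v : V, ~~ odd #|[set e | (v, e) \in S]|
    & forall e : E, #|[set v | (v, e) \in S]| = 1].

Definition intersecting_pair_partition (P : {set {set E}}) : Prop :=
  partition P [set: E] /\
  forall B, B \in P -> exists e e' : E,
    [/\ e != e', B = [set e; e'] & inc e :&: inc e' != set0].

End Hyper.

(* Main.v *)
Require Import Defs.
From mathcomp Require Import all_boot.
Set Implicit Arguments. Unset Strict Implicit. Unset Printing Implicit Defensive.

Notation lastv x s := (last x (map snd s)).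

Section Walks.
Variables (V E : finType) (inc : E -> {set V}).
Local Notation ws := (walk_steps inc).


Lemma ws_cat x s1 s2 : ws x (s1 ++ s2) = ws x s1 && ws (lastv x s1) s2.
Proof. by elim: s1 x => [|[e w] s IH] x //=; rewrite IH !andbA. Qed.

Lemma lastv_cat (x : V) (s1 s2 : seq (E * V)) : lastv x (s1 ++ s2) = lastv (lastv x s1) s2.
Proof. by rewrite map_cat last_cat. Qed.

Fixpoint rsteps (x : V) (s : seq (E * V)) : seq (E * V) :=
  match s with [::] => [::] | (e, w) :: s' => rcons (rsteps w s') (e, x) end.

Lemma lastv_rsteps (x : V) (s : seq (E * V)) : lastv (lastv x s) (rsteps x s) = x.
Proof. by case: s => [|[e w] s] //=; rewrite map_rcons last_rcons. Qed.

Lemma ws_rsteps x s : ws x s -> ws (lastv x s) (rsteps x s).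
Proof.
elim: s x => [|[e w] s IH] x //= /and4P [xw xe we Hs].
by rewrite -cats1 ws_cat IH //= lastv_rsteps eq_sym xw xe we.
Qed.

Lemma edges_rsteps (x : V) (s : seq (E * V)) : map fst (rsteps x s) = rev (map fst s).
Proof.
by elim: s x => [|[e w] s IH] x //=; rewrite map_rcons IH rev_cons.
Qed.

Lemma size_rsteps (x : V) (s : seq (E * V)) : size (rsteps x s) = size s.
Proof. by rewrite -(size_map fst) edges_rsteps size_rev size_map. Qed.

Lemma rotate_closed x s u :
  ws x s -> lastv x s = x -> u \in x :: map snd s ->
  exists s', [/\ ws u s', lastv u s' = u, perm_eq (map fst s') (map fst s),
     size s' = size s & (x :: map snd s) =i (u :: map snd s')].
Proof.
move=> Hw Hl; rewrite inE => /orP [/eqP -> | ].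
  by exists s; split.
move=> us.
have [i [Hi Hu]] : exists i, i < size s /\ nth x (map snd s) i = u.
  exists (index u (map snd s)); rewrite nth_index // -(size_map snd) index_mem //.
set p := take i.+1 s; set q := drop i.+1 s.
have Es : s = p ++ q by rewrite cat_take_drop.
have Lp : lastv x p = u.
  rewrite /p map_take (last_nth x) size_takel ?size_map //=.
  by rewrite nth_take // ?size_map.
have Lq : lastv u q = x by rewrite -Lp -lastv_cat -Es.
exists (q ++ p); split.
- move: Hw; rewrite Es !ws_cat Lp => /andP [H1 H2].
  by rewrite H2 /= Lq H1.
- by rewrite lastv_cat Lq.
- by rewrite Es !map_cat perm_catC.
- by rewrite Es !size_cat addnC.
- move=> y; rewrite Es !inE !map_cat !mem_cat.
  have Hx : x \in u :: map snd q.
    by rewrite -Lq mem_last.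
  have Hu' : u \in x :: map snd p.
    by rewrite -Lp mem_last.
  apply/idP/idP.
  + case/or3P => [/eqP -> | yp | yq].
    * by move: Hx; rewrite inE => /orP [/eqP -> | ->]; rewrite ?eqxx ?orbT.
    * by rewrite yp !orbT.
    * by rewrite yq orbT.
  + case/or3P => [/eqP -> | yq | yp].
    * by move: Hu'; rewrite inE => /orP [/eqP -> | ->]; rewrite ?eqxx ?orbT.
    * by rewrite yq !orbT.
    * by rewrite yp orbT.
Qed.

Lemma disjP (A B : seq V) :
  reflect (forall x, x \in A -> x \in B -> False) [disjoint A & B].
Proof.
rewrite disjoint_has; apply: (iffP hasPn) => H x xA.
  by move=> xB; move: (H x xA); rewrite xB.
by apply/negP => xB; exact: (H x xA xB).
Qed.

Definition cw (W : walk V E) := is_walk inc W && is_closed W.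
Definition disj (W1 W2 : walk V E) := [disjoint anchors W1 & anchors W2].

Lemma merge_ex (W1 W2 : walk V E) u :
  cw W1 -> cw W2 -> u \in anchors W1 -> u \in anchors W2 ->
  exists W, [/\ cw W, perm_eq (walk_edges W) (walk_edges W1 ++ walk_edges W2)
    & forall v, v \in anchors W -> (v \in anchors W1) || (v \in anchors W2)].
Proof.
case: W1 => x1 s1; case: W2 => x2 s2.
rewrite /cw /is_walk /is_closed /anchors /walk_edges /=.
move=> /andP [w1 /andP [z1 /eqP l1]] /andP [w2 /andP [z2 /eqP l2]] u1 u2.
have [s1' [w1' l1' p1 e1 a1]] := rotate_closed w1 l1 u1.
have [s2' [w2' l2' p2 e2 a2]] := rotate_closed w2 l2 u2.
exists (u, s1' ++ s2'); split.
- rewrite /cw /is_walk /is_closed /= ws_cat w1' l1' w2' lastv_cat l1' l2' eqxx.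
  by rewrite size_cat e1 (leq_trans z1) ?leq_addr.
- by rewrite /walk_edges /= map_cat perm_cat.
- rewrite /anchors /= => v; rewrite a1 a2 !inE map_cat mem_cat.
  by case/orP => [-> // | /orP [-> | ->]]; rewrite ?orbT.
Qed.

Definition fedges (G : seq (walk V E)) := flatten (map (@walk_edges V E) G).

Lemma insert_ex W G : cw W -> all cw G -> pairwise disj G ->
  exists G', [/\ all cw G', pairwise disj G',
    perm_eq (fedges G') (walk_edges W ++ fedges G) &
    forall X v, X \in G' -> v \in anchors X ->
       (v \in anchors W) || has (fun Y => v \in anchors Y) G].
Proof.
elim: G W => [|H G0 IH] W cW.
  move=> _ _; exists [:: W]; split => //=; first by rewrite cW.
  by move=> X v; rewrite inE => /eqP -> ->.
move=> /= /andP [cH aG] /andP [dH pG].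
case dWH: (disj W H).
- have [G1 [a1 p1 e1 s1]] := IH W cW aG pG.
  exists (H :: G1); split => /=.
  + by rewrite cH a1.
  + rewrite p1 andbT; apply/allP => X XG1; apply/disjP => v vH vX.
    case/orP: (s1 X v XG1 vX) => [vW | /hasP [Y YG0 vY]].
      exact: (disjP _ _ dWH v vW vH).
    exact: (disjP _ _ (allP dH Y YG0) v vH vY).
  + by rewrite /fedges /= perm_sym perm_catCA perm_cat2l perm_sym.
  + move=> X v; rewrite inE => /orP [/eqP -> -> | XG1 vX]; first by rewrite orbT.
    by case/orP: (s1 X v XG1 vX) => [-> // | ->]; rewrite !orbT.
- move/negbT: dWH; rewrite /disj disjoint_has negbK => /hasP [u uW uH].
  have [M [cM pM sM]] := merge_ex cW cH uW uH.
  have [G1 [a1 p1 e1 s1]] := IH M cM aG pG.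
  exists G1; split => //.
  + apply: (perm_trans e1); rewrite /fedges /= catA.
    by rewrite perm_cat2r.
  + move=> X v XG1 vX; case/orP: (s1 X v XG1 vX) => [/sM /orP [-> | ->] | ->];
    by rewrite ?orbT.
Qed.

Lemma disjointify F : all cw F ->
  exists G, [/\ all cw G, pairwise disj G & perm_eq (fedges G) (fedges F)].
Proof.
elim: F => [|W F IH]; first by exists [::].
move=> /= /andP [cW /IH [G [aG pG eG]]].
have [G' [a' p' e' _]] := insert_ex cW aG pG.
exists G'; split => //; apply: (perm_trans e').
by rewrite /fedges /= perm_cat2l.
Qed.

Lemma count_flatten (G : seq (walk V E)) e : uniq (fedges G) ->
  count (fun W => e \in walk_edges W) G = (e \in fedges G).
Proof.
elim: G => [|W G IH] //=; rewrite /fedges /= cat_uniq => /and3P [_ hn u].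
rewrite IH // mem_cat; case eW: (e \in walk_edges W) => //=.
case eG: (e \in fedges G) => //.
by move/hasP: hn; case; exists e.
Qed.

Lemma family_of G : all cw G -> pairwise disj G ->
  perm_eq (fedges G) (enum E) -> euler_family inc G.
Proof.
move=> aG pG eG.
have uG : uniq (fedges G) by rewrite (perm_uniq eG) enum_uniq.
split => //.
- apply/allP => W WG; move/allP: aG => /(_ W WG) /andP [w c].
  rewrite /is_closed_strict_trail w c /is_strict_trail /=.
  move: uG; rewrite /fedges; elim: G WG {pG eG} => [|Y G IH] //=.
  rewrite inE cat_uniq => /orP [/eqP <- | WG] /and3P [u1 _ u2] //.
  exact: IH.
- by move=> e; rewrite count_flatten // (perm_mem eG) mem_enum.
Qed.
End Walks.
Section Seg.
Variables (V E : finType) (inc : E -> {set V}).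
Local Notation ws := (walk_steps inc).
Local Notation cw := (cw inc).

Definition cnt (v : V) (W : walk V E) : nat := (W.1 == v) + (lastv W.1 W.2 == v).
Definition seg (W : walk V E) := ws W.1 W.2 && (0 < size W.2).

Lemma odd_sum_has (l : seq (walk V E)) f :
  odd (\sum_(W <- l) f W) -> exists2 W, W \in l & odd (f W).
Proof.
elim: l => [|W l IH]; first by rewrite big_nil.
rewrite big_cons oddD; case oW: (odd (f W)) => /=.
  by move=> _; exists W; rewrite ?inE ?eqxx.
by move=> /IH [Y Yl oY]; exists Y; rewrite // inE Yl orbT.
Qed.

Lemma closed_size x s : ws x s -> 0 < size s -> lastv x s = x -> 2 <= size s.
Proof.
case: s => [|[e w] [|p s]] //= /and4P [xw _ _ _] _ wx.
by move: xw; rewrite wx eqxx.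
Qed.

Lemma fedges_perm (L1 L2 : seq (walk V E)) :
  perm_eq L1 L2 -> perm_eq (fedges L1) (fedges L2).
Proof. by move=> p; apply: perm_flatten; apply: perm_map. Qed.

Lemma segments_ex n (L : seq (walk V E)) : size L <= n ->
  all seg L -> (forall v, ~~ odd (\sum_(W <- L) cnt v W)) ->
  exists F, all cw F /\ perm_eq (fedges F) (fedges L).
Proof.
elim: n L => [|n IH] L.
  by rewrite leqn0 => /nilP -> _ _; exists [::].
move=> sL aL eL.
have [allc | ] := boolP (all (fun W : walk V E => lastv W.1 W.2 == W.1) L).
  exists L; split => //; apply/allP => W WL.
  move/allP: aL => /(_ W WL) /andP [w z]; move/allP: allc => /(_ W WL) /eqP l.
  by rewrite /cw /is_walk /is_closed w (closed_size w) // l eqxx.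
case/allPn => W1 W1L; case: W1 W1L => a p W1L /= op.
set v := lastv a p in op.
have pL1 := perm_to_rem W1L.
set L1 := rem (a, p) L in pL1.
have oL1 : odd (\sum_(W <- L1) cnt v W).
  move: (eL v); rewrite (perm_big _ pL1) big_cons /cnt /= eqxx eq_sym (negbTE op) /=.
  by rewrite add0n negbK.
have [W2 W2L1 oW2] := odd_sum_has oL1.
have pL2 := perm_to_rem W2L1.
set L2 := rem W2 L1 in pL2.
have W2L : W2 \in L by move: W2L1; rewrite (perm_mem pL1) inE orbC => ->.
move/allP: (aL) => /(_ W2 W2L) /andP [w2 z2].
move/allP: (aL) => /(_ _ W1L) /andP [w1 z1].
have [q [wq zq eq cq]] : exists q, [/\ ws v q, 0 < size q,
     perm_eq (map fst q) (map fst W2.2) &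
     forall u, (v == u) + (lastv v q == u) = cnt u W2].
  case: W2 {W2L1 pL2 L2 W2L} oW2 w2 z2 => x2 s2 /=; rewrite /cnt /=.
  case: (x2 =P v) => [-> | _] /=.
    case: (lastv v s2 =P v) => // _ _ w2 z2; exists s2; split => //.
  case: (lastv x2 s2 =P v) => // <- _ w2 z2.
  exists (rsteps x2 s2); split.
  - exact: ws_rsteps.
  - by rewrite size_rsteps.
  - by rewrite edges_rsteps perm_rev.
  - by move=> u; rewrite lastv_rsteps addnC.
set L' := (a, p ++ q) :: L2.
have [F [aF eF]] : exists F, all cw F /\ perm_eq (fedges F) (fedges L').
  apply: IH.
  - move: sL; rewrite (perm_size pL1) /= (perm_size pL2) /=.
    by rewrite ltnS; apply: leq_trans.
  - rewrite /= /seg /= ws_cat w1 wq size_cat (leq_trans z1) ?leq_addr //=.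
    apply/allP => W WL2; move/allP: aL; apply.
    by rewrite (perm_mem pL1) inE (perm_mem pL2) inE WL2 !orbT.
  - move=> u; move: (eL u); rewrite (perm_big _ pL1) big_cons.
    rewrite (perm_big _ pL2) big_cons /L' big_cons -cq /cnt /= lastv_cat.
    rewrite !oddD /=.
    rewrite -/v; case: (a == u); case: (v == u); case: (lastv v q == u) => /=; by case: (odd _).
exists F; split => //; apply: (perm_trans eF).
have pL : perm_eq L ((a,p) :: W2 :: L2) by apply: (perm_trans pL1); rewrite perm_cons.
rewrite perm_sym; apply: (perm_trans (fedges_perm pL)); rewrite perm_sym.
by rewrite /fedges /= /walk_edges /= map_cat -catA perm_cat2l perm_cat2r.
Qed.
End Seg.

Lemma sum_bool_card (T : finType) (P : pred T) : \sum_(e <- enum T) (P e : nat) = #|[set e | P e]|.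
Proof.
rewrite -sum1_card; transitivity (\sum_(i | P i) 1).
  rewrite [RHS]big_mkcond [LHS]big_enum /=.
  by apply: eq_bigr => i _; case: (P i).
by apply: eq_bigl => i; rewrite inE.
Qed.

Section Two.
Variables (V E : finType) (inc : E -> {set V}).
Local Notation ws := (walk_steps inc).

Lemma two_to_one (x0 : V) (S : {set V * E}) :
  three_uniform inc -> (forall v : V, ~~ odd (vdeg inc v)) ->
  good_spanning_subgraph inc S -> quasi_eulerian inc.
Proof.
move=> H3 Hev [Sinc Sv Se].
pose B e := [set v | (v, e) \in S].
pose N e := inc e :\: B e.
have BsI e : B e \subset inc e.
  by apply/subsetP => v; rewrite inE => /Sinc.
have cN e : #|N e| = 2.
  by rewrite cardsD H3 (setIidPr (BsI e)) Se.
pose x e := nth x0 (enum (N e)) 0.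
pose y e := nth x0 (enum (N e)) 1.
have sN e : size (enum (N e)) = 2 by rewrite -cardE cN.
have EN e : enum (N e) = [:: x e; y e].
  move: (sN e); rewrite /x /y; case: (enum (N e)) => [|a [|b [|c l]]] //.
have xy e : x e != y e.
  by move: (enum_uniq (N e)); rewrite EN /= inE andbT.
have xN e : x e \in N e by rewrite -mem_enum EN inE eqxx.
have yN e : y e \in N e by rewrite -mem_enum EN !inE eqxx orbT.
have NI e v : v \in N e -> v \in inc e by rewrite inE => /andP [].
have Nmem e v : (v \in N e) = (x e == v) || (y e == v).
  by rewrite -mem_enum EN !inE ![v == _]eq_sym.
pose L := [seq (x e, [:: (e, y e)]) | e <- enum E].
have [F [aF eF]] : exists F, all (cw inc) F /\ perm_eq (fedges F) (fedges L).
  apply: (@segments_ex V E inc (size L) L (leqnn _)).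
  - apply/allP => W /mapP [e _ ->]; rewrite /seg /= xy !NI //.
  - move=> v; rewrite big_map /cnt /=.
    have -> : \sum_(j <- enum E) ((x j == v) + (y j == v)) =
              \sum_(j <- enum E) ((v \in N j) : nat).
      apply: eq_bigr => e _; rewrite Nmem.
      case ex: (x e == v); case ey: (y e == v) => //.
      by move: (xy e); rewrite (eqP ex) (eqP ey) eqxx.
    rewrite sum_bool_card; move: (Hev v); rewrite /vdeg.
    rewrite -(cardsID [set e | (v, e) \in S]) oddD.
    have -> : [set e | v \in inc e] :&: [set e | (v, e) \in S] = [set e | (v, e) \in S].
      by apply/setIidPr/subsetP => e; rewrite !inE => /Sinc.
    have -> : [set e | v \in inc e] :\: [set e | (v, e) \in S] = [set e | v \in N e].
      by apply/setP => e; rewrite !inE andbC.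
    by rewrite (negbTE (Sv v)).
have [G [aG pG eG]] := disjointify aF.
exists G; apply: family_of => //; apply: (perm_trans eG); apply: (perm_trans eF).
by rewrite /fedges /L -map_comp /comp /walk_edges /= flatten_seq1.
Qed.

End Two.

Lemma count1_uniq (T : eqType) (p : pred T) (l : seq T) x y :
  count p l = 1 -> x \in l -> p x -> y \in l -> p y -> x = y.
Proof.
move=> c xl px yl py; apply/eqP; apply/negPn/negP => yx.
move: c; rewrite ((permP (perm_to_rem xl)) p) /= px add1n => -[].
move/eqP; rewrite eqn0Ngt -has_count => /hasPn /(_ y).
by rewrite rem_mem 1?eq_sym // py => /(_ isT).
Qed.

Section One.
Variables (V E : finType) (inc : E -> {set V}).
Local Notation ws := (walk_steps inc).

Fixpoint ends (x : V) (s : seq (E * V)) : seq (V * E) :=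
  match s with [::] => [::] | (e, w) :: s' => (x, e) :: (w, e) :: ends w s' end.

Lemma ends_mem x s q : q \in ends x s -> (q.2 \in map fst s) && (q.1 \in x :: map snd s).
Proof.
elim: s x => [|[e w] s IH] x //=; rewrite !inE.
case/or3P => [/eqP -> | /eqP -> | /IH /andP [a b]] /=; rewrite ?eqxx ?orbT //.
by rewrite a orbT; move: b; rewrite inE => /orP [-> | ->]; rewrite !orbT.
Qed.

Lemma ends_inc x s q : ws x s -> q \in ends x s -> q.1 \in inc q.2.
Proof.
elim: s x => [|[e w] s IH] x //= /and4P [_ xe we Hs]; rewrite !inE.
by case/or3P => [/eqP -> | /eqP -> | /(IH _ Hs)].
Qed.

Lemma ends_odd x s v : ws x s -> uniq (map fst s) ->
  odd #|[set e | (v, e) \in ends x s]| = (x == v) (+) (lastv x s == v).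
Proof.
elim: s x => [|[e w] s IH] x /=.
  by move=> _ _; rewrite (_ : [set e | _] = set0) ?cards0 ?addbb //; apply/setP => e; rewrite !inE.
move=> /and4P [xw _ _ Hs] /andP [eN u].
set R := [set e0 | (v, e0) \in ends w s].
have eR : e \notin R.
  apply/negP; rewrite inE => /ends_mem /andP [/= H _]; by rewrite H in eN.
have -> : [set e0 | (v, e0) \in (x, e) :: (w, e) :: ends w s] =
          if (x == v) || (w == v) then e |: R else R.
  apply/setP => e0; rewrite !inE /= !xpair_eqE.
  rewrite ![v == _]eq_sym; case: (x == v); case: (w == v) => /=;
  rewrite ?inE /R ?inE //; by case: (e0 == e).
have nb : ~~ ((x == v) && (w == v)).
  by apply/negP => /andP [/eqP a /eqP b]; move: xw; rewrite a b eqxx.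
have -> : #|if (x == v) || (w == v) then e |: R else R| = ((x == v) || (w == v)) + #|R|.
  by case: ifP => _; rewrite ?cardsU1 ?eR.
rewrite oddD IH //; move: nb; case: (x == v); case: (w == v) => //= _; by case: (_ == v).
Qed.

Lemma ends_two x s e : ws x s -> uniq (map fst s) -> e \in map fst s ->
  #|[set u | (u, e) \in ends x s]| = 2.
Proof.
elim: s x => [|[e' w] s IH] x //= /and4P [xw _ _ Hs] /andP [eN u].
rewrite inE => /orP [/eqP ee | es].
  subst e'.
  have -> : [set u0 | (u0, e) \in (x, e) :: (w, e) :: ends w s] = [set x; w].
    apply/setP => u0; rewrite !inE /= !xpair_eqE !eqxx !andbT.
    case: ((u0, e) \in ends w s) / boolP => [/ends_mem /andP [/= H _] | _].
      by rewrite H in eN.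
    by rewrite orbF.
  by rewrite cards2 xw.
rewrite -(IH w) //; apply: eq_card => u0; rewrite !inE /= !xpair_eqE.
have ne : e != e' by apply/negP => /eqP ee; rewrite -ee es in eN.
by rewrite (negbTE ne) !andbF.
Qed.

Lemma pairwise_anchor (F : seq (walk V E)) W1 W2 v :
  pairwise (fun A B => [disjoint anchors A & anchors B]) F ->
  W1 \in F -> W2 \in F -> v \in anchors W1 -> v \in anchors W2 -> W1 = W2.
Proof.
elim: F => [|W F IH] //= /andP [dW pF].
rewrite !inE => /orP [/eqP -> | W1F] /orP [/eqP -> | W2F] // v1 v2.
- by case: (disjP _ _ (allP dW _ W2F) v v1 v2).
- by case: (disjP _ _ (allP dW _ W1F) v v2 v1).
- exact: IH.
Qed.

Lemma one_to_two : three_uniform inc -> (forall v, ~~ odd (vdeg inc v)) ->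
  quasi_eulerian inc -> exists S, good_spanning_subgraph inc S.
Proof.
move=> H3 Hev [F [aF cF pF]].
have wF W : W \in F -> [/\ ws W.1 W.2, lastv W.1 W.2 = W.1 & uniq (map fst W.2)].
  move=> WF; move/allP: aF => /(_ W WF) /and3P [w /andP [_ /eqP l] u]; by split.
pose T := [set p | has (fun W : walk V E => p \in ends W.1 W.2) F].
have Tinc p : p \in T -> p.1 \in inc p.2.
  rewrite inE => /hasP [W WF pW]; have [w _ _] := wF W WF; exact: ends_inc w pW.
have memT p : (p \in T) = has (fun W : walk V E => p \in ends W.1 W.2) F by rewrite inE.
clearbody T.
exists [set p | incidence_edge inc p && (p \notin T)]; split.
- by move=> p; rewrite inE => /andP [].
- move=> v.
  have -> : [set e | (v, e) \in [set p | incidence_edge inc p && (p \notin T)]] =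
     [set e | v \in inc e] :\: [set e | (v, e) \in T].
    by apply/setP => e; rewrite !inE /incidence_edge /= andbC.
  have sub : [set e | (v, e) \in T] \subset [set e | v \in inc e].
    by apply/subsetP => e; rewrite !inE => /Tinc.
  rewrite cardsD (setIidPr sub) oddB ?subset_leq_card //.
  have -> : odd #|[set e | (v, e) \in T]| = false.
    have [/hasP [W0 W0F vW0] | nh] := boolP (has (fun W : walk V E => v \in anchors W) F).
      have -> : [set e | (v, e) \in T] = [set e | (v, e) \in ends W0.1 W0.2].
        apply/setP => e; rewrite !inE memT; apply/hasP/idP => [[W WF vW] | H]; last by exists W0.
        have := ends_mem vW; rewrite /= => /andP [_ va].
        by rewrite -(pairwise_anchor pF WF W0F va vW0).
      have [w l u] := wF W0 W0F; rewrite (ends_odd v w u) l; by case: (_ == v).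
    have -> : [set e | (v, e) \in T] = set0; last by rewrite cards0.
    apply/setP => e; rewrite !inE memT; apply/negP => /hasP [W WF vW].
    have := ends_mem vW; rewrite /= => /andP [_ va].
    by move/hasPn: nh => /(_ W WF); rewrite va.
  by rewrite addbF; apply: Hev.
- move=> e.
  have -> : [set u | (u, e) \in [set p | incidence_edge inc p && (p \notin T)]] =
     inc e :\: [set u | (u, e) \in T].
    by apply/setP => u; rewrite !inE /incidence_edge /= andbC.
  have sub : [set u | (u, e) \in T] \subset inc e.
    by apply/subsetP => u; rewrite !inE => /Tinc.
  rewrite cardsD (setIidPr sub) H3.
  have /hasP [W0 W0F eW0] : has (fun W => e \in walk_edges W) F by rewrite has_count cF.
  have -> : [set u | (u, e) \in T] = [set u | (u, e) \in ends W0.1 W0.2].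
    apply/setP => u; rewrite !inE memT; apply/hasP/idP => [[W WF eW] | H]; last by exists W0.
    have := ends_mem eW; rewrite /= => /andP [ew _].
    by rewrite -(count1_uniq (cF e) WF ew W0F eW0).
  have [w l uu] := wF W0 W0F; by rewrite ends_two.
Qed.
End One.

Section Pairs.
Variables (V E : finType) (inc : E -> {set V}).

Lemma three_to_two (x0 : V) (P : {set {set E}}) :
  intersecting_pair_partition inc P -> exists S, good_spanning_subgraph inc S.
Proof.
move=> [/and3P [/eqP cP tP nP] HB].
pose c (B : {set E}) := odflt x0 [pick v | [forall e in B, v \in inc e]].
have cinc B e : B \in P -> e \in B -> c B \in inc e.
  move=> BP eB; have [e1 [e2 [_ BE /set0Pn [w]]]] := HB B BP.
  rewrite inE => /andP [w1 w2].
  rewrite /c; case: pickP => [v /forall_inP H | H] /=; first exact: H.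
  suff : [forall e in B, w \in inc e] by rewrite H.
  by apply/forall_inP => e0; rewrite BE !inE => /orP [] /eqP ->.
have eP e : e \in cover P by rewrite cP inE.
exists [set p | p.1 == c (pblock P p.2)]; split.
- move=> [v e]; rewrite inE /= => /eqP ->; rewrite /incidence_edge /=.
  by apply: cinc; [apply: pblock_mem | rewrite mem_pblock].
- move=> v.
  pose Q := [set B in P | c B == v].
  have -> : [set e | (v, e) \in [set p | p.1 == c (pblock P p.2)]] = cover Q.
    apply/setP => e; rewrite !inE /cover; apply/idP/bigcupP.
      move=> H; exists (pblock P e); last by rewrite mem_pblock.
      by rewrite inE pblock_mem // eq_sym.
    move=> [B]; rewrite inE => /andP [BP /eqP <-] eB.
    by rewrite (def_pblock tP BP eB).
  have tQ : trivIset Q by apply: (trivIsetS _ tP); apply/subsetP => B; rewrite inE => /andP [].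
  move: tQ; rewrite /trivIset => /eqP <-.
  rewrite (eq_bigr (fun _ => 2)) ?sum_nat_const ?oddM ?andbF //.
  move=> B; rewrite inE => /andP [BP _]; have [e1 [e2 [ne -> _]]] := HB B BP.
  by rewrite cards2 ne.
- move=> e; rewrite (_ : [set v | _] = [set c (pblock P e)]) ?cards1 //.
  by apply/setP => v; rewrite !inE.
Qed.

Fixpoint pairs (s : seq E) : seq {set E} :=
  match s with a :: b :: t => [set a; b] :: pairs t | _ => [::] end.

Lemma pairs_shape s B : B \in pairs s -> uniq s ->
  exists a b, [/\ a != b, a \in s, b \in s & B = [set a; b]].
Proof.
move: {2}(size s) (leqnn (size s)) => n; elim: n s => [|n IH] [|a [|b t]] //=.
move=> sz; rewrite inE => /orP [/eqP -> | Bt] /andP [].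
  by rewrite inE negb_or => /andP [ab _] _; exists a, b; rewrite !inE !eqxx orbT.
move=> _ /andP [_ ut]; have [x [y [xy xt yt ->]]] := IH t (ltnW sz) Bt ut.
by exists x, y; rewrite !inE xt yt !orbT.
Qed.

Lemma pairs_sub s B x : B \in pairs s -> x \in B -> x \in s.
Proof.
move: {2}(size s) (leqnn (size s)) => n; elim: n s => [|n IH] [|a [|b t]] //=.
move=> sz; rewrite inE => /orP [/eqP -> | Bt].
  by rewrite !inE => /orP [] ->; rewrite ?orbT.
by move=> xB; rewrite !inE (IH t (ltnW sz) Bt xB) !orbT.
Qed.

Lemma pairs_cover s x : ~~ odd (size s) -> x \in s -> exists2 B, B \in pairs s & x \in B.
Proof.
move: {2}(size s) (leqnn (size s)) => n; elim: n s => [|n IH] [|a [|b t]] //=.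
move=> sz; rewrite negbK => ev; rewrite !inE => /or3P [/eqP -> | /eqP -> | xt].
- by exists [set a; b]; rewrite !inE ?eqxx ?orbT.
- by exists [set a; b]; rewrite !inE ?eqxx ?orbT.
- have [B Bt xB] := IH t (ltnW sz) ev xt.
  by exists B; rewrite // inE Bt orbT.
Qed.

Lemma pairs_disj s B1 B2 : uniq s -> B1 \in pairs s -> B2 \in pairs s ->
  B1 != B2 -> [disjoint B1 & B2].
Proof.
move: {2}(size s) (leqnn (size s)) => n; elim: n s => [|n IH] [|a [|b t]] //=.
move=> sz /and3P [].
rewrite !inE negb_or => /andP [_ at_] bt ut.
have dis B x : B \in pairs t -> x \in [set a; b] -> x \in B -> False.
  move=> Bt; rewrite !inE => /orP [] /eqP -> /(pairs_sub Bt).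
  - by rewrite (negbTE at_).
  - by rewrite (negbTE bt).
move=> /orP [/eqP -> | B1t] /orP [/eqP -> | B2t]; rewrite ?eqxx //.
- move=> _; rewrite -setI_eq0; apply/eqP/setP => x; rewrite !inE.
  by apply/negP => /andP [xa xB]; apply: (dis B2 x B2t); rewrite // !inE.
- move=> _; rewrite -setI_eq0; apply/eqP/setP => x; rewrite !inE.
  by apply/negP => /andP [xB xa]; apply: (dis B1 x B1t) => //; rewrite !inE.
- by apply: (IH t (ltnW sz) ut).
Qed.

Lemma two_to_three (S : {set V * E}) :
  good_spanning_subgraph inc S -> exists P, intersecting_pair_partition inc P.
Proof.
move=> [Sinc Sv Se].
pose Ev v := [set e | (v, e) \in S].
have uniqv e v1 v2 : (v1, e) \in S -> (v2, e) \in S -> v1 = v2.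
  move: (Se e) => /eqP /cards1P [w Hw] h1 h2.
  have : v1 \in [set v | (v, e) \in S] by rewrite inE.
  have : v2 \in [set v | (v, e) \in S] by rewrite inE.
  by rewrite Hw !inE => /eqP -> /eqP ->.
exists [set B | [exists v, B \in pairs (enum (Ev v))]]; split.
- apply/and3P; split.
  + rewrite eqEsubset subsetT /=; apply/subsetP => e _.
    have : 0 < #|[set v | (v, e) \in S]| by rewrite Se.
    case/card_gt0P => v; rewrite inE => vS.
    have h1 : ~~ odd (size (enum (Ev v))) by rewrite -cardE; apply: Sv.
    have h2 : e \in enum (Ev v) by rewrite mem_enum inE.
    have [B BP eB] := pairs_cover h1 h2.
    rewrite /cover; apply/bigcupP; exists B => //.
    by rewrite inE; apply/existsP; exists v.
  + apply/trivIsetP => B1 B2; rewrite !inE => /existsP [v1 H1] /existsP [v2 H2] ne.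
    have [e12 | nv] := eqVneq v1 v2.
      by subst v2; exact: (pairs_disj (enum_uniq _) H1 H2 ne).
    rewrite -setI_eq0; apply/eqP/setP => x; rewrite !inE.
    apply/negP => /andP [x1 x2].
    have := pairs_sub H1 x1; have := pairs_sub H2 x2; rewrite !mem_enum !inE => h2 h1.
    by move: nv; rewrite (uniqv _ _ _ h1 h2) eqxx.
  + apply/negP; rewrite inE => /existsP [v H].
    have [a [b [_ _ _ E0]]] := pairs_shape H (enum_uniq _).
    by move/setP: E0 => /(_ a); rewrite !inE eqxx.
- move=> B; rewrite inE => /existsP [v H].
  have [a [b [ab aE bE ->]]] := pairs_shape H (enum_uniq _).
  exists a, b; split => //; apply/set0Pn; exists v.
  move: aE bE; rewrite !mem_enum !inE => /Sinc ha /Sinc hb.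
  by apply/andP.
Qed.
End Pairs.

Theorem theorem2p38 (V E : finType) (inc : E -> {set V}) :
  0 < #|V| ->
  three_uniform inc ->
  (forall v : V, ~~ odd (vdeg inc v)) ->
  (quasi_eulerian inc <->
     exists S : {set V * E}, good_spanning_subgraph inc S) /\
  ((exists S : {set V * E}, good_spanning_subgraph inc S) <->
     exists P : {set {set E}}, intersecting_pair_partition inc P).
Proof.
move=> hV H3 Hev.
have [x0 _] := card_gt0P hV.
split; split.
- exact: one_to_two.
- by case => S HS; exact: (two_to_one x0 H3 Hev HS).
- by case => S HS; exact: (two_to_three HS).
- by case => P HP; exact: (three_to_two x0 HP).
Qed.
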